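(* Let $n\ge1$, $m=2n-1$ and $0\le\alpha\le n-1$. An element $s\in R_\alpha^{\langle\tau\rangle}\setminus\{\pm1\}$ lies in $Q_\alpha$ if and only if either (a) $\alpha\ge\lfloor n/2\rfloor$, $s\not\equiv\pm1\bmod u$, and $s^2-1\bmod u$ is a square in $k^\times$; or (b) $s\equiv\varepsilon\bmod u$ with $\varepsilon\in\{\pm1\}$, $s=\varepsilon+t^js_0+O(t^{j+1})$ with $s_0\in k^\times$ and $\max\{1,n-(2\alpha+1)\}\le j\le n-\alpha-1$, and $\varepsilon(-1)^j2s_0$ is a square in $k^\times$. Moreover, with $\mathrm{pr}_\alpha:R_\alpha^{\langle\tau\rangle}=k[t]/(t^{n-\alpha})\to k[t]/(t^{n-\alpha-1})$ the reduction map: (i) if $0\le\alpha\le n-2$, the preimage of $1$ (resp. of $-1$) under $\mathrm{pr}_\alpha|_{Q_\alpha}$ has exactly $(q-1)/2$ elements; (ii) if $0\le\alpha\le n-2$ and $s_0\in R_\alpha^{\langle\tau\rangle,\prime}$ with $\mathrm{pr}_\alpha(s_0)\ne\pm1$, then $\mathrm{pr}_\alpha^{-1}(\mathrm{pr}_\alpha(s_0))$ has $q$ elements, and $s_0\in Q_\alpha$ if and only if $\mathrm{pr}_\alpha^{-1}(\mathrm{pr}_\alpha(s_0))\subseteq Q_\alpha$; (iii) $\#Q_{n-1}=(q-3)/2$.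
   Context: $k=\mathbb F_q$, $q$ odd, $t=u^2$. For $0\le\alpha<n$ and $m=2n-1$ let $R_\alpha=k[u]/(u^{m-2\alpha})$ with $\tau$ acting by $u\mapsto-u$, $R_\alpha^{\langle\tau\rangle}=k[t]/(t^{n-\alpha})$ its invariants, $R_\alpha^{\langle\tau\rangle,\prime}=\{s\in R_\alpha^{\langle\tau\rangle}: s\equiv\pm1\bmod u^{m+1-2(2\alpha+1)}\}$ (no condition if the exponent is $\le0$), $N_{\tau,\alpha}:R_\alpha\to R_\alpha^{\langle\tau\rangle}$, $s\mapsto s\tau(s)$, and $Q_\alpha=\{s\in R_\alpha^{\langle\tau\rangle,\prime}: s\tau(s)-1\in N_{\tau,\alpha}(R_\alpha)\}\setminus\{\pm1\}$. *)

(* Defs.v *)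
From HB Require Import structures.
From mathcomp Require Import all_boot all_order all_algebra all_field.
Set Implicit Arguments. Unset Strict Implicit. Unset Printing Implicit Defensive.
Import GRing.Theory.
Local Open Scope ring_scope.

Section Defs.
Variable k : finFieldType.

(* R_alpha = k[u]/(u^(m - 2 alpha)), m = 2n-1 *)
Definition Rexp (n a : nat) : nat := (2 * n - 1 - 2 * a)%N.
Definition Ru (n a : nat) := {poly %/ ('X^(Rexp n a) : {poly k})}.
(* R_alpha^<tau> = k[t]/(t^(n - alpha)) *)
Definition Rt (n a : nat) := {poly %/ ('X^(n - a) : {poly k})}.
Definition Rpr (n a : nat) := {poly %/ ('X^(n - a - 1) : {poly k})}.

Definition tau n a (x : Ru n a) : Ru n a := in_qpoly _ ((val x) \Po (- 'X)).
(* the identification k[t]/(t^(n-alpha)) = R_alpha^<tau>, t = u^2 *)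
Definition emb n a (s : Rt n a) : Ru n a := in_qpoly _ ((val s) \Po 'X^2).
Definition Ntau n a (x : Ru n a) : Ru n a := x * tau x.
Definition congru n a (e : nat) (x y : Ru n a) : bool :=
  dvdp 'X^e (val x - val y).
Definition pr n a (s : Rt n a) : Rpr n a := in_qpoly _ (val s).

(* R_alpha^{<tau>,'}: exponent m+1-2(2 alpha+1), truncated at 0 (no condition) *)
Definition Rprime n a (s : Rt n a) : bool :=
  let e := ((2 * n - 1) + 1 - 2 * (2 * a + 1))%N in
  congru e (emb s) 1 || congru e (emb s) (-1).

Definition Qset n a : {set Rt n a} :=
  [set s : Rt n a | [&& Rprime s,
     [exists x : Ru n a, emb s * tau (emb s) - 1 == Ntau x],
     s != 1 & s != -1]].

Definition sq_unit (c : k) : Prop := exists y : k, y != 0 /\ y ^+ 2 = c.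

Definition condA n a (s : Rt n a) : Prop :=
  [/\ (n %/ 2 <= a)%N,
      ~~ congru 1 (emb s) 1, ~~ congru 1 (emb s) (-1) &
      sq_unit ((val (emb s))`_0 ^+ 2 - 1)].

Definition condB n a (s : Rt n a) : Prop :=
  exists (eps : k) (j : nat) (s0 : k),
    [/\ eps = 1 \/ eps = -1,
        congru 1 (emb s) (eps%:A) /\ s0 != 0,
        dvdp 'X^(j.+1) (val s - (eps%:P + s0 *: 'X^j)),
        (maxn 1 (n - (2 * a + 1)) <= j <= n - a - 1)%N &
        sq_unit (eps * (-1) ^+ j * 2 * s0)].
End Defs.

(* Main.v *)
Require Import Defs.
From HB Require Import structures.
From mathcomp Require Import all_boot all_order all_algebra all_field.
From mathcomp Require Import ring lra zify.
Import GRing.Theory.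
Local Open Scope ring_scope.
Set Implicit Arguments. Unset Strict Implicit. Unset Printing Implicit Defensive.

Section Basics.
Variable k : fieldType.
Implicit Types p q w : {poly k}.

Lemma dvdX_coef0 p : ('X %| p) = (p`_0 == 0).
Proof.
have -> : ('X : {poly k}) = 'X - 0%:P by rewrite subr0.
by rewrite dvdp_XsubCl /root horner_coef0.
Qed.

Lemma dvdXn_mulX n p : ('X^(n.+1) %| 'X * p) = ('X^n %| p).
Proof. by rewrite exprS dvdp_mul2l // polyX_eq0. Qed.

Lemma dvdXnW m n p : (m <= n)%N -> 'X^n %| p -> 'X^m %| p.
Proof. by move=> hmn; apply: dvdp_trans; apply: dvdp_exp2l. Qed.

Lemma dvdXS n p : 'X^(n.+1) %| p -> 'X %| p.
Proof. by move=> h; rewrite -[X in X %| p]expr1; apply: dvdXnW h. Qed.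

Lemma coef0_factor p : p`_0 = 0 -> exists q, p = 'X * q.
Proof.
move=> h; have : ('X %| p) by rewrite dvdX_coef0 h.
by case/dvdpP => q ->; exists q; rewrite mulrC.
Qed.

Lemma coef0_comp2 p : (p \Po 'X^2)`_0 = p`_0.
Proof. by rewrite coef_comp_poly_Xn // dvdn0 div0n. Qed.

Lemma dvdX_comp2 p : ('X %| p \Po 'X^2) = ('X %| p).
Proof. by rewrite !dvdX_coef0 coef0_comp2. Qed.

Lemma dvdX_odd i p : ('X^(i.*2.+1) %| p \Po 'X^2) = ('X^(i.+1) %| p).
Proof.
elim: i p => [|i IH] p; first by rewrite !expr1 dvdX_comp2.
apply/idP/idP => h.
  have := dvdXS h.
  rewrite dvdX_comp2 dvdX_coef0 => /eqP /coef0_factor [q hq].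
  move: h; rewrite hq dvdXn_mulX rmorphM /= comp_polyX.
  rewrite (_ : (i.+1.*2.+1 = 2 + i.*2.+1)%N); last by rewrite doubleS.
  by rewrite exprD dvdp_mul2l ?IH // expf_neq0 // polyX_eq0.
have := dvdXS h.
rewrite dvdX_coef0 => /eqP /coef0_factor [q hq].
move: h; rewrite hq dvdXn_mulX -IH rmorphM /= comp_polyX.
rewrite (_ : (i.+1.*2.+1 = 2 + i.*2.+1)%N); last by rewrite doubleS.
by rewrite exprD dvdp_mul2l // expf_neq0 // polyX_eq0.
Qed.

Lemma dvdX_even i p : ('X^(i.*2) %| p \Po 'X^2) = ('X^i %| p).
Proof.
case: i => [|i]; first by rewrite !expr0 !dvd1p.
apply/idP/idP => h.
  by rewrite -dvdX_odd; apply: dvdp_trans h; rewrite dvdp_exp2l.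
case/dvdpP: h => q ->; rewrite rmorphM /= comp_Xn_poly -exprM mul2n.
exact: dvdp_mull.
Qed.

End Basics.

Section Q.
Variable k : fieldType.
Variable N : nat.
Hypothesis hN : (0 < N)%N.
Implicit Types p q : {poly k}.
Local Notation d := ('X^N : {poly k}).

Lemma mkmXn : mk_monic d = d.
Proof. by rewrite mk_monic_Xn prednK. Qed.

Lemma monic_d : d \is monic.
Proof. exact: monicXn. Qed.

Lemma val_inq p : val (in_qpoly d p) = Pdiv.Ring.rmodp p d.
Proof. by rewrite /= mkmXn. Qed.

Lemma inq_eq p q : (in_qpoly d p == in_qpoly d q) = (d %| p - q).
Proof.
rewrite -val_eqE !val_inq; apply/eqP/idP => [h|].
  rewrite (Pdiv.RingMonic.rdivp_eq monic_d p) (Pdiv.RingMonic.rdivp_eq monic_d q) h.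
  have -> : forall a b c : {poly k}, a + c - (b + c) = a - b by move=> a b c; rewrite opprD addrACA subrr addr0.
  by rewrite -mulrBl dvdp_mulIr.
case/dvdpP => r hr; rewrite -(subrK q p) hr.
by rewrite Pdiv.RingMonic.rmodpD ?monic_d // Pdiv.RingMonic.rmodp_mull ?monic_d // add0r.
Qed.

Lemma inq_val (x : {poly %/ d}) : in_qpoly d (val x) = x.
Proof.
apply: val_inj; rewrite val_inq Pdiv.Ring.rmodp_small //.
by apply: (leq_trans (size_mk_monic x)); rewrite mkmXn.
Qed.

Lemma dvd_rmodp e p q : (e <= N)%N ->
  ('X^e %| Pdiv.Ring.rmodp p d - q) = ('X^e %| p - q).
Proof.
move=> he.
have hd : 'X^e %| d by apply: dvdp_exp2l.
have E := Pdiv.RingMonic.rdivp_eq monic_d p.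
set r := Pdiv.Ring.rmodp p d in E *; set D := Pdiv.CommonRing.rdivp p d in E.
rewrite [in RHS]E -[in RHS]addrA [in RHS]dvdp_addr //; exact: dvdp_mull hd.
Qed.

Lemma compNX2 : ('X^2 : {poly k}) \Po (- 'X) = 'X^2.
Proof. by rewrite comp_Xn_poly sqrrN. Qed.

Lemma comp2NX p : (p \Po 'X^2) \Po (- 'X) = p \Po 'X^2.
Proof. by rewrite -comp_polyA compNX2. Qed.

Lemma tau_inq p :
  in_qpoly d (val (in_qpoly d p) \Po (- 'X)) = in_qpoly d (p \Po (- 'X)).
Proof.
apply/eqP; rewrite inq_eq val_inq.
have E := Pdiv.RingMonic.rdivp_eq monic_d p.
set r := Pdiv.Ring.rmodp p d in E *; set D := Pdiv.CommonRing.rdivp p d in E.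
rewrite E rmorphD rmorphM /= comp_Xn_poly exprNn.
have -> : forall u v : {poly k}, u - (v + u) = - v.
  by move=> u v; rewrite opprD addrCA subrr addr0.
by rewrite mulrA dvdpNr dvdp_mull.
Qed.

Lemma norm_inq p :
  in_qpoly d p * in_qpoly d (val (in_qpoly d p) \Po (- 'X)) =
  in_qpoly d (p * (p \Po (- 'X))).
Proof. by rewrite tau_inq in_qpolyM. Qed.

Lemma evenodd_norm (A B : {poly k}) :
  (A \Po 'X^2 + (B \Po 'X^2) * 'X) * ((A \Po 'X^2 + (B \Po 'X^2) * 'X) \Po (- 'X))
   = (A ^+ 2 - 'X * B ^+ 2) \Po 'X^2.
Proof.
rewrite rmorphD rmorphM /= !comp2NX comp_polyX.
have -> : (A ^+ 2 - 'X * B ^+ 2) \Po 'X^2 = (A \Po 'X^2) ^+ 2 - 'X^2 * (B \Po 'X^2) ^+ 2.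
  by rewrite !expr2 comp_polyB !comp_polyM comp_polyX.
set a := A \Po 'X^2; set b := B \Po 'X^2.
ring.
Qed.

Lemma inq_sub1 p : in_qpoly d p - 1 = in_qpoly d (p - 1).
Proof. by rewrite raddfB /= in_qpoly1. Qed.

Lemma normQ (S : {poly k}) (i : nat) : N = i.*2.+1 ->
  (exists x : {poly %/ d},
     in_qpoly d (S \Po 'X^2) * in_qpoly d (val (in_qpoly d (S \Po 'X^2)) \Po (- 'X)) - 1
       == x * in_qpoly d (val x \Po (- 'X)))
  <-> (exists A B, 'X^(i.+1) %| S ^+ 2 - 1 - (A ^+ 2 - 'X * B ^+ 2)).
Proof.
move=> hNi.
have nx : forall x : {poly %/ d}, x * in_qpoly d (val x \Po (- 'X)) =
    in_qpoly d (val x * (val x \Po (- 'X))).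
  by move=> x; rewrite in_qpolyM inq_val.
have hS : (S ^+ 2 - 1) \Po 'X^2 = (S \Po 'X^2) * ((S \Po 'X^2) \Po (- 'X)) - 1.
  by rewrite comp2NX expr2 comp_polyB comp_polyM comp_polyC.
rewrite norm_inq inq_sub1; split.
  case=> x; rewrite nx inq_eq.
  move: (val x) => P.
  rewrite -(poly_even_odd P) evenodd_norm.
  rewrite -hS -comp_polyB hNi dvdX_odd => h.
  by exists (even_poly P), (odd_poly P).
case=> A [B h]; exists (in_qpoly d (A \Po 'X^2 + (B \Po 'X^2) * 'X)).
by rewrite norm_inq inq_eq evenodd_norm -hS -comp_polyB hNi dvdX_odd.
Qed.

End Q.

Section NV.
Variable k : finFieldType.
Implicit Types p q w A B : {poly k}.






Lemma coef0_Xn n p : (0 < n)%N -> ('X^n * p)`_0 = 0.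
Proof. by move=> hn; rewrite coef0M coefXn; case: n hn => // n _; rewrite mul0r. Qed.

Lemma coef0_X p : ('X * p)`_0 = 0.
Proof. by rewrite coef0M coefX mul0r. Qed.

Lemma coef0_sq p : (p ^+ 2)`_0 = p`_0 ^+ 2.
Proof. by rewrite !expr2 coef0M. Qed.

Lemma normval_nec j : forall L w A B, (j < L)%N -> w`_0 != 0 ->
  'X^L %| 'X^j * w - (A ^+ 2 - 'X * B ^+ 2) -> sq_unit ((-1) ^+ j * w`_0).
Proof.
elim: j => [|j IH] L w A B hL hw h.
  have h1 : 'X %| w - (A ^+ 2 - 'X * B ^+ 2).
    by move: h; rewrite expr0 mul1r; apply: dvdp_trans; rewrite -{1}(expr1 'X) dvdp_exp2l.
  move: h1; rewrite dvdX_coef0 !coefB coef0_sq coef0_X subr0 subr_eq0 => /eqP e.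
  exists A`_0; split; last by rewrite expr0 mul1r e.
  by apply: contra hw => /eqP z; rewrite e z expr2 mulr0.
have h1 : 'X %| 'X^(j.+1) * w - (A ^+ 2 - 'X * B ^+ 2).
  by apply: dvdp_trans h; rewrite -{1}(expr1 'X) dvdp_exp2l //; case: L hL.
move: h1; rewrite dvdX_coef0 !coefB coef0_sq coef0_X coef0_Xn // subr0 sub0r oppr_eq0.
rewrite expf_eq0 /= => /eqP /coef0_factor [A' hA].
case: L hL h => // L hL h.
have E : 'X^(j.+1) * w - (A ^+ 2 - 'X * B ^+ 2) =
   'X * - ('X^j * (- w) - (B ^+ 2 - 'X * A' ^+ 2)).
  rewrite hA exprS; ring.
move: h; rewrite E dvdXn_mulX dvdpNr => h.
have := IH L (- w) B A' hL _ h; rewrite coefN oppr_eq0 => /(_ hw).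
by rewrite exprS mulN1r mulrN mulNr.
Qed.

Hypothesis two : (2%:R : k) != 0.

Lemma sqrt_lift w r : r != 0 -> r ^+ 2 = w`_0 ->
  forall M, exists a : {poly k}, a`_0 = r /\ 'X^(M.+1) %| a ^+ 2 - w.
Proof.
move=> hr hw; elim=> [|M [a [ha h]]].
  exists r%:P; split; first by rewrite coefC.
  by rewrite expr1 dvdX_coef0 coefB coef0_sq coefC hw subrr.
case/dvdpP: h => g hg.
set c := g`_0 / (2%:R * r).
exists (a - c%:P * 'X^(M.+1)); split.
  by rewrite coefB coef0M coefC coefXn /= mulr0 subr0.
have E : (a - c%:P * 'X^(M.+1)) ^+ 2 - w =
   'X^(M.+1) * (g - 2%:R * c%:P * a + c%:P ^+ 2 * 'X^(M.+1)).
  have -> : (a - c%:P * 'X^(M.+1)) ^+ 2 - w = (a ^+ 2 - w) - 2%:R * c%:P * a * 'X^(M.+1) + c%:P ^+ 2 * 'X^(M.+1) * 'X^(M.+1) by ring.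
  rewrite hg; ring.
rewrite E -addn1 exprD dvdp_mul2l ?expf_neq0 ?polyX_eq0 // expr1.
rewrite dvdX_coef0 coefD coefB !coef0M coefXn /= mulr0 addr0 ha.
rewrite -polyC_natr !coefC /= /c; apply/eqP; field.
by rewrite hr two.
Qed.

Lemma normval_suff j L w : (j < L)%N -> w`_0 != 0 ->
  sq_unit ((-1) ^+ j * w`_0) ->
  exists A B, 'X^L %| 'X^j * w - (A ^+ 2 - 'X * B ^+ 2).
Proof.
move=> hL hw [r [hr hsq]].
have hj := odd_double_half j.
case: L hL => // L hL.
case: (boolP (odd j)) hj hsq => ho hj hsq.
all: rewrite -signr_odd in hsq.
all: first [rewrite ho in hsq | rewrite (negbTE ho) in hsq].
- have hs : r ^+ 2 = (- w)`_0 by rewrite coefN hsq /= expr1 mulN1r.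
  have [a [_ ha]] := sqrt_lift hr hs L.
  have hj' : j = (j./2).*2.+1 by rewrite -[in LHS](odd_double_half j) ho add1n.
  move: (j./2) hj' => i ->.
  exists 0, ('X^i * a).
  have -> : 'X^(i.*2.+1) * w - (0 ^+ 2 - 'X * ('X^i * a) ^+ 2) =
     'X^(i.*2.+1) * (a ^+ 2 - - w).
    by rewrite -muln2 exprSr exprM; ring.
  by apply: dvdp_mull.
- have hs : r ^+ 2 = w`_0 by rewrite hsq /= expr0 mul1r.
  have [a [_ ha]] := sqrt_lift hr hs L.
  have hj' : j = (j./2).*2 by rewrite -[in LHS](odd_double_half j) (negbTE ho) add0n.
  move: (j./2) hj' => i ->.
  exists ('X^i * a), 0.
  have -> : 'X^(i.*2) * w - (('X^i * a) ^+ 2 - 'X * 0 ^+ 2) =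
     - ('X^(i.*2) * (a ^+ 2 - w)).
    by rewrite -muln2 exprM; ring.
  by rewrite dvdpNr; apply: dvdp_mull.
Qed.

Lemma normval j L w : (j < L)%N -> w`_0 != 0 ->
  (exists A B, 'X^L %| 'X^j * w - (A ^+ 2 - 'X * B ^+ 2)) <->
  sq_unit ((-1) ^+ j * w`_0).
Proof.
move=> hL hw; split; first by case=> A [B h]; exact: normval_nec h.
exact: normval_suff.
Qed.

End NV.
Section Aux.
Variable k : fieldType.
Implicit Types p q W : {poly k}.

Lemma dvdXn_cancel i p : ('X^(i.+1) %| 'X^i * p) = ('X %| p).
Proof. by rewrite exprSr dvdp_mul2l // expf_neq0 // polyX_eq0. Qed.

Lemma dvdXn_XnW e j W : W`_0 != 0 -> ('X^e %| 'X^j * W) = (e <= j)%N.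
Proof.
move=> hW; case: (leqP e j) => h.
  by apply: dvdp_mulr; apply: dvdp_exp2l.
apply/negbTE/negP => /(dvdXnW h) ; rewrite dvdXn_cancel dvdX_coef0.
by apply/negP.
Qed.

Lemma decompX p : p != 0 -> exists j W, p = 'X^j * W /\ W`_0 != 0.
Proof.
move: {2}(size p) (leqnn (size p)) => m; elim: m p => [|m IH] p hs hp.
  by move: hs; rewrite leqn0 size_poly_eq0 (negbTE hp).
case: (eqVneq p`_0 0) => h0; last by exists 0%N, p; rewrite expr0 mul1r.
have [q hq] := coef0_factor h0.
have hq0 : q != 0 by apply: contra hp; rewrite hq => /eqP ->; rewrite mulr0.
have [|j [W [hW hW0]]] := IH q _ hq0.
  move: hs; rewrite hq mulrC size_mulX //.
by exists j.+1, W; split => //; rewrite hq hW exprS mulrA.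
Qed.

Lemma uniq_val j W i c : W`_0 != 0 -> c != 0 ->
  'X^(i.+1) %| 'X^j * W - c *: 'X^i -> i = j /\ c = W`_0.
Proof.
move=> hW hc h.
have hcX : forall m, ('X^(m.+1) %| c *: 'X^m) = false.
  move=> m; rewrite -mul_polyC mulrC dvdXn_cancel dvdX_coef0 coefC /=.
  exact: negbTE.
case: (ltngtP i j) => hij.
- have h1 : 'X^(i.+1) %| 'X^j * W by rewrite dvdXn_XnW.
  by move: h; rewrite dvdp_addr // dvdpNr hcX.
- have h2 : 'X^(j.+1) %| 'X^j * W - c *: 'X^i by apply: dvdXnW h; lia.
  have h3 : 'X^(j.+1) %| c *: 'X^i.
    rewrite -mul_polyC; apply: dvdp_mull; apply: dvdp_exp2l; lia.
  by move: h2; rewrite dvdp_addl ?dvdpNr // dvdXn_XnW // ltnn.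
- subst i; split => //.
  move: h; rewrite -mul_polyC (mulrC c%:P) -mulrBr dvdXn_cancel dvdX_coef0.
  by rewrite coefB coefC /= subr_eq0 => /eqP.
Qed.

End Aux.
Section Count.

Lemma card_2to1 (T U : finType) (A : {set T}) (f : T -> U) (g : T -> T) :
  (forall x, x \in A -> [/\ g x \in A, g x != x & f (g x) = f x]) ->
  (forall x y, x \in A -> y \in A -> f x = f y -> y = x \/ y = g x) ->
  #|A| = (2 * #|f @: A|)%N.
Proof.
move=> hg hf.
rewrite -sum1_card (partition_big f (mem (f @: A))); last first.
  by move=> x hx; apply: imset_f.
rewrite mulnC -sum_nat_const; apply: eq_bigr => u /imsetP [x0 hx0 ->].
have [hg1 hg2 hg3] := hg x0 hx0.
rewrite sum1_card.
have -> : 2%N = #|[set x0; g x0]| by rewrite cards2 eq_sym hg2.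
apply: eq_card => y; rewrite !inE.
apply/andP/idP.
  case=> hy /eqP e; have [->|->] := hf _ _ hx0 hy (esym e); by rewrite eqxx ?orbT.
by case/orP => /eqP ->; split => //; rewrite ?hg3.
Qed.

End Count.
Section FieldCount.
Variable k : finFieldType.
Hypothesis two : (2%:R : k) != 0.

Definition sqb (c : k) := [exists y : k, (y != 0) && (y ^+ 2 == c)].

Lemma sqbP c : reflect (sq_unit c) (sqb c).
Proof.
apply: (iffP existsP) => [[y /andP [h1 /eqP h2]]|[y [h1 h2]]]; exists y => //.
by rewrite h1 h2 eqxx.
Qed.

Lemma neq_opp (y : k) : y != 0 -> - y != y.
Proof.
move=> hy; apply/negP => /eqP e.
have /eqP : 2%:R * y = 0 by rewrite mulr_natl mulr2n -{1}e addNr.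
by rewrite mulf_eq0 (negbTE two) (negbTE hy).
Qed.

Lemma card_sq : #|[set c | sqb c]| = (#|k| - 1)./2.
Proof.
have E : [set c | sqb c] = (fun y : k => y ^+ 2) @: [set~ 0].
  apply/setP => c; rewrite inE; apply/existsP/imsetP.
    by case=> y /andP [h1 /eqP h2]; exists y; rewrite ?inE.
  by case=> y; rewrite !inE => h1 ->; exists y; rewrite h1 eqxx.
have h : #|[set~ (0 : k)]| = (2 * #|(fun y : k => y ^+ 2) @: [set~ (0%R : k)]|)%N.
  apply: (card_2to1 (g := fun y => - y)).
    move=> x; rewrite !inE => hx; split; rewrite ?oppr_eq0 ?sqrrN //.
    exact: neq_opp.
  move=> x y; rewrite !inE => hx hy /eqP; rewrite eq_sym -subr_eq0 subr_sqr.
  by rewrite mulf_eq0 subr_eq0 addr_eq0 => /orP [] /eqP; auto.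
by rewrite E; move: h; rewrite cardsC1 subn1 => ->; rewrite mul2n doubleK.
Qed.

Lemma card_sq_scale (u : k) : u != 0 -> #|[set c | sqb (u * c)]| = (#|k| - 1)./2.
Proof.
move=> hu.
have -> : [set c | sqb (u * c)] = (fun c => u * c) @^-1: [set c | sqb c].
  by apply/setP => c; rewrite !inE.
by rewrite card_preimset ?card_sq //; apply: mulfI.
Qed.

Lemma one_neqN1 : (1 : k) != -1.
Proof. by rewrite eq_sym neq_opp // oner_eq0. Qed.

Lemma card_conic :
  #|[set c : k | [&& c != 1, c != -1 & sqb (c ^+ 2 - 1)]]| = (#|k| - 3)./2.
Proof.
pose A := [set z : k | (z != 0) && (z ^+ 2 != 1)].
pose f := fun z : k => (z + z^-1) / 2%:R.
have hA : #|A| = (#|k| - 3)%N.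
  have -> : A = [set~ 0%R] :\: [set 1; -1].
    apply/setP => z; rewrite !inE sqrf_eq1 negb_or andbC.
    by case: (z == 0).
  rewrite cardsDS ?cardsC1 ?cards2 ?one_neqN1 /=; first by lia.
  by apply/subsetP => z; rewrite !inE => /orP [] /eqP ->; rewrite ?oppr_eq0 oner_eq0.
have h2 : #|A| = (2 * #|f @: A|)%N.
  apply: (card_2to1 (g := fun z => z^-1)).
    move=> x; rewrite !inE => /andP [hx0 hx1].
    rewrite invr_eq0 hx0 exprVn invr_eq1 hx1; split => //.
      by apply/negP => /eqP e; move: hx1; rewrite expr2 -{1}e mulVf // eqxx.
    by rewrite /f invrK addrC.
  move=> x y; rewrite !inE => /andP [hx0 _] /andP [hy0 _]; rewrite /f => h.
  have h2i : (2%:R : k)^-1 != 0 by rewrite invr_eq0.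
  have h' : x + x^-1 = y + y^-1 := mulIf h2i h.
  have e : (x - y) * (x * y - 1) = 0.
    have -> : (x - y) * (x * y - 1) = x * y * ((x + x^-1) - (y + y^-1)).
      by field; rewrite hx0 hy0.
    by rewrite h' subrr mulr0.
  move/eqP: e; rewrite mulf_eq0 subr_eq0 => /orP [/eqP ->|]; first by left.
  rewrite subr_eq0 => /eqP e; right.
  by apply: (mulfI hx0); rewrite e mulfV.
have E : f @: A = [set c : k | [&& c != 1, c != -1 & sqb (c ^+ 2 - 1)]].
  apply/setP => c; rewrite !inE; apply/imsetP/idP.
    case=> z; rewrite !inE => /andP [hz0 hz1] ->.
    have hy : (z - z^-1) / 2%:R != 0.
      rewrite mulf_neq0 ?invr_eq0 // subr_eq0; apply/negP => /eqP e.
      by move: hz1; rewrite expr2 {2}e mulfV ?eqxx.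
    have e : f z ^+ 2 - 1 = ((z - z^-1) / 2%:R) ^+ 2 by rewrite /f; field; rewrite ?hz0 ?two.
    have hne : f z ^+ 2 != 1.
      by rewrite -subr_eq0 e expf_neq0.
    rewrite sqrf_eq1 negb_or in hne; case/andP: hne => -> ->.
    by apply/sqbP; exists ((z - z^-1) / 2%:R).
  case/and3P => h1 h2' /sqbP [y [hy e]].
  have hz : (c + y) * (c - y) = 1.
    by rewrite mulrC -subr_sqr e opprB addrC subrK.
  have hz0 : c + y != 0 by apply/negP => /eqP h; move: hz; rewrite h mul0r => /eqP; rewrite eq_sym oner_eq0.
  have hzi : (c + y)^-1 = c - y.
    by rewrite -[c - y]mul1r -(mulVf hz0) -mulrA hz mulr1.
  exists (c + y); last by rewrite /f hzi; field.
  rewrite !inE hz0 /=; apply/negP => /eqP h.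
  have : c + y = c - y.
    by rewrite -hzi; apply: (mulfI hz0); rewrite mulfV // -expr2 h.
  by move/addrI => e'; move: (neq_opp hy); rewrite -e' eqxx.
by rewrite -E; move: h2; rewrite hA => ->; rewrite mul2n doubleK.
Qed.
End FieldCount.
Section Main.
Variable k : finFieldType.
Variables n a : nat.
Hypothesis hn : (0 < n)%N.
Hypothesis han : (a <= n - 1)%N.
Hypothesis two : (2%:R : k) != 0.

Local Notation L := (n - a)%N.
Local Notation N := (Rexp n a).

Lemma hN : (0 < N)%N.
Proof. rewrite /Rexp; lia. Qed.

Lemma hNi : N = (L.-1).*2.+1.
Proof. rewrite /Rexp -!muln2; lia. Qed.

Lemma hL : (0 < L)%N.
Proof. lia. Qed.

Lemma val1 (d : {poly k}) : val (1 : {poly %/ d}) = 1.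
Proof. by []. Qed.

Lemma valN1 (d : {poly k}) : val (-1 : {poly %/ d}) = -1.
Proof. by []. Qed.

Lemma val1C (d : {poly k}) : val (1 : {poly %/ d}) = 1%:P.
Proof. by []. Qed.

Lemma valN1C (d : {poly k}) : val (-1 : {poly %/ d}) = (-1)%:P.
Proof. by rewrite polyCN. Qed.

Lemma valA (d : {poly k}) (c : k) : val (c%:A : {poly %/ d}) = c%:P.
Proof. by rewrite /= alg_polyC. Qed.

Lemma size_val (s : Rt k n a) : (size (val s) <= L)%N.
Proof.
rewrite -ltnS; apply: leq_trans (size_mk_monic s) _.
by rewrite mk_monic_Xn size_polyXn prednK // hL.
Qed.

Lemma val_emb (s : Rt k n a) :
  val (emb s) = Pdiv.Ring.rmodp (val s \Po 'X^2) 'X^N.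
Proof. exact: (val_inq hN). Qed.

Lemma congru_even i (s : Rt k n a) (c : Ru k n a) c0 : (i.*2 <= N)%N ->
  val c = c0%:P -> congru (i.*2) (emb s) c = ('X^i %| val s - c0%:P).
Proof.
move=> hi hc; rewrite /congru val_emb dvd_rmodp // hc.
by rewrite -[c0%:P in LHS](comp_polyC c0 'X^2) -comp_polyB dvdX_even.
Qed.

Lemma congru1 (s : Rt k n a) (c : Ru k n a) c0 :
  val c = c0%:P -> congru 1 (emb s) c = ((val s)`_0 == c0).
Proof.
move=> hc; rewrite /congru val_emb dvd_rmodp ?hN // hc.
rewrite -[c0%:P in LHS](comp_polyC c0 'X^2) -comp_polyB.
rewrite (dvdX_odd 0) expr1 dvdX_coef0 coefB coefC /= subr_eq0.
by [].
Qed.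

Lemma coef0_emb (s : Rt k n a) : (val (emb s))`_0 = (val s)`_0.
Proof.
have : 'X^1 %| val (emb s) - (val s \Po 'X^2).
  by rewrite val_emb dvd_rmodp ?hN // subrr dvdp0.
by rewrite expr1 dvdX_coef0 coefB subr_eq0 coef0_comp2 => /eqP.
Qed.

Lemma Rprime_iff (s : Rt k n a) : Rprime s =
  ('X^(n - (2*a+1)) %| val s - 1) || ('X^(n - (2*a+1)) %| val s + 1).
Proof.
rewrite /Rprime.
have -> : ((2 * n - 1) + 1 - 2 * (2 * a + 1) = (n - (2*a+1)).*2)%N by rewrite -muln2; lia.
have hle : ((n - (2*a+1)).*2 <= N)%N by rewrite /Rexp -muln2; lia.
rewrite (congru_even _ hle (val1C _)) (congru_even _ hle (valN1C _)).
by rewrite polyCN opprK.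
Qed.

Lemma memQ (s : Rt k n a) : s \in Qset k n a <->
  [/\ Rprime s,
      (exists A B, 'X^L %| val s ^+ 2 - 1 - (A ^+ 2 - 'X * B ^+ 2)),
      val s != 1 & val s != -1].
Proof.
have nq := normQ hN (val s) hNi.
rewrite prednK ?hL // in nq.
rewrite inE -!val_eqE /=.
split.
  case/and4P => hR /existsP ex h1 h2; split => //.
  by apply/nq; case: ex => x hx; exists x.
case=> hR hAB h1 h2; rewrite hR h1 h2 !andbT /=.
by apply/existsP; case/nq: hAB => x hx; exists x.
Qed.

Lemma charQ1 (s : Rt k n a) : (val s)`_0 != 1 -> (val s)`_0 != -1 ->
  (s \in Qset k n a <-> (n <= 2*a+1)%N /\ sq_unit ((val s)`_0 ^+ 2 - 1)).
Proof.
move=> h1 h2; rewrite memQ.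
have hS1 : val s != 1 by apply: contra h1 => /eqP ->; rewrite coef1.
have hS2 : val s != -1 by apply: contra h2 => /eqP ->; rewrite coefN coef1.
have hw : (val s ^+ 2 - 1)`_0 != 0.
  rewrite coefB coef0_sq coef1 /= -(expr1n _ 2) subr_sqr mulf_neq0 //.
    by rewrite subr_eq0.
  by rewrite addr_eq0.
have nv := normval two hL hw.
rewrite expr0 !mul1r coefB coef0_sq coef1 /= in nv.
have hR : Rprime s = (n <= 2*a+1)%N.
  rewrite Rprime_iff; case: (leqP n (2*a+1)) => h.
    have -> : (n - (2*a+1) = 0)%N by lia.
    by rewrite expr0 dvd1p.
  have he : (1 <= n - (2*a+1))%N by lia.
  apply/negbTE; rewrite negb_or; apply/andP; split; apply/negP => hd;
    have := dvdXnW he hd.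
    by rewrite expr1 dvdX_coef0 coefB coef1 /= subr_eq0 (negbTE h1).
  by rewrite expr1 dvdX_coef0 coefD coef1 /= addr_eq0 (negbTE h2).
rewrite hR; split.
  by case=> hn2 hAB _ _; split => //; apply/nv.
by case=> hn2 hsq; split => //; apply/nv.
Qed.

Lemma charQ2 (s : Rt k n a) (eps : k) j (W : {poly k}) :
  (eps = 1 \/ eps = -1) -> (0 < j)%N -> W`_0 != 0 ->
  val s = eps%:P + 'X^j * W ->
  (s \in Qset k n a <->
     (n - (2*a+1) <= j)%N /\ sq_unit ((-1) ^+ j * (W`_0 * (2%:R * eps)))).
Proof.
move=> heps hj hW0 hs.
have heps2 : eps ^+ 2 = 1 by case: heps => ->; rewrite ?sqrrN expr1n.
have hepsN : eps != - eps.
  apply/negP => /eqP e.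
  have /eqP : 2%:R * eps = 0 by rewrite mulr_natl mulr2n {1}e addNr.
  rewrite mulf_eq0 (negbTE two) /= => /eqP h0; move: heps2.
  by rewrite h0 expr0n /= => /eqP; rewrite eq_sym oner_eq0.
have hW : W != 0 by apply: contra hW0 => /eqP ->; rewrite coef0.
have hS0 : (val s)`_0 = eps by rewrite hs coefD coefC coef0_Xn // addr0.
have hjL : (j < L)%N.
  have : (size ('X^j * W)%R <= L)%N.
    have -> : 'X^j * W = val s - eps%:P by rewrite hs addrAC subrr add0r.
    apply: leq_trans (size_add _ _) _; rewrite geq_max size_val size_opp size_polyC.
    by case: (eps != 0) => //=; rewrite hL.
  rewrite mulrC size_mulXn //.
  by have := size_poly_gt0 W; rewrite hW; lia.
have hd1 : forall e, ('X^e %| val s - eps%:P) = (e <= j)%N.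
  by move=> e; rewrite hs addrAC subrr add0r dvdXn_XnW.
have hd2 : forall e, ('X^e %| val s + eps%:P) -> (e <= j)%N.
  move=> e; case: e => // e h.
  have he1 : (1 <= e.+1)%N by [].
  have := dvdXnW he1 h.
  rewrite expr1 dvdX_coef0 coefD coefC /= hS0 addr_eq0.
  by rewrite (negbTE hepsN).
have hR : Rprime s = (n - (2*a+1) <= j)%N.
  have e1 := hd1 (n - (2*a+1))%N; have e2 := @hd2 (n - (2*a+1))%N.
  case: heps => he.
    rewrite he polyC1 in e1 e2; rewrite Rprime_iff e1.
    by apply/idP/idP => [/orP [] // /e2 //|->].
  rewrite he polyCN polyC1 opprK in e1 e2; rewrite Rprime_iff e1.
  by apply/idP/idP => [/orP [/e2|] //|->]; rewrite ?orbT.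
have hp2 : eps%:P ^+ 2 = 1 :> {poly k} by rewrite -rmorphXn /= heps2.
have hw : (W * (2%:R * eps%:P + 'X^j * W))`_0 = W`_0 * (2%:R * eps).
  by rewrite coef0M coefD coef0_Xn // addr0 -polyC_natr -polyCM coefC.
have hw0 : (W * (2%:R * eps%:P + 'X^j * W))`_0 != 0.
  rewrite hw mulf_neq0 // mulf_neq0 //.
  by apply: contra hepsN => /eqP ->; rewrite oppr0.
have nv := normval two hjL hw0.
rewrite hw in nv.
have hsq : val s ^+ 2 - 1 = 'X^j * (W * (2%:R * eps%:P + 'X^j * W)).
  rewrite hs.
  have -> : (eps%:P + 'X^j * W) ^+ 2 - 1 =
     'X^j * (W * (2%:R * eps%:P + 'X^j * W)) + (eps%:P ^+ 2 - 1) by ring.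
  by rewrite hp2 subrr addr0.
have hne : val s != 1 /\ val s != -1.
  have n1 : val s != eps%:P by rewrite hs -subr_eq0 addrAC subrr add0r mulf_neq0 // expf_neq0 // polyX_eq0.
  have n2 : val s != - eps%:P.
    by apply/negP => /eqP e; move: hS0; rewrite e coefN coefC /= => /eqP; rewrite eq_sym (negbTE hepsN).
  by case: heps => he; rewrite he ?polyC1 ?polyCN ?polyC1 ?opprK in n1 n2; split.
rewrite memQ hR hsq; split.
  by case=> hr hAB _ _; split => //; apply/nv.
by case=> hr hq; case: hne => ne1 ne2; split => //; apply/nv.
Qed.

Lemma jltL (s : Rt k n a) (eps : k) j (W : {poly k}) :
  W != 0 -> val s = eps%:P + 'X^j * W -> (j < L)%N.
Proof.
move=> hW hs.
have : (size ('X^j * W)%R <= L)%N.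
  have -> : 'X^j * W = val s - eps%:P by rewrite hs addrAC subrr add0r.
  apply: leq_trans (size_add _ _) _; rewrite geq_max size_val size_opp size_polyC.
  by case: (eps != 0) => //=; rewrite hL.
rewrite mulrC size_mulXn //.
by have := size_poly_gt0 W; rewrite hW; lia.
Qed.

Lemma part1B (s : Rt k n a) eps : (eps = 1 \/ eps = -1) -> (val s)`_0 = eps ->
  val s != eps%:P -> (s \in Qset k n a <-> condA s \/ condB s).
Proof.
move=> heps hS0 hne.
have hne' : val s - eps%:P != 0 by rewrite subr_eq0.
have [j [W [hd hW0]]] := decompX hne'.
have hW : W != 0 by apply: contra hW0 => /eqP ->; rewrite coef0.
have hj : (0 < j)%N.
  case: j hd {hW} => // hd; move: hW0; rewrite -[W]mul1r -(expr0 'X) -hd.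
  by rewrite coefB coefC hS0 subrr eqxx.
have hs : val s = eps%:P + 'X^j * W by rewrite -hd addrC subrK.
have hjL := jltL hW hs.
have hc : congru 1 (emb s) (eps%:A) by rewrite (congru1 _ (valA _ _)) hS0.
rewrite (charQ2 heps hj hW0 hs); split.
  case=> he hq; right; exists eps, j, W`_0; split => //.
  - rewrite hs.
    have -> : eps%:P + 'X^j * W - (eps%:P + W`_0 *: 'X^j) = 'X^j * (W - (W`_0)%:P).
      by rewrite -mul_polyC; ring.
    by rewrite dvdXn_cancel dvdX_coef0 coefB coefC subrr.
  - apply/andP; split; [rewrite geq_max; apply/andP; split => //| lia].
  - by move: hq; congr sq_unit; ring.
case=> [[_ c1 c2 _]|].
  case: heps => he; move: hc; rewrite he.
    by rewrite (congru1 _ (valA _ _)) -(congru1 _ (val1C _)) (negbTE c1).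
  by rewrite (congru1 _ (valA _ _)) -(congru1 _ (valN1C _)) (negbTE c2).
case=> eps' [j' [s0 [he' [hc' hs0] hdv hb hsq]]].
have ee : eps' = eps.
  by move: hc'; rewrite (congru1 _ (valA _ _)) hS0 => /eqP.
subst eps'.
have hdv' : 'X^(j'.+1) %| 'X^j * W - s0 *: 'X^j'.
  by move: hdv; rewrite hs; congr (_ %| _); rewrite -!mul_polyC; ring.
have [ej es] := uniq_val hW0 hs0 hdv'.
subst j' s0; split; first by move: hb; rewrite geq_max; lia.
by move: hsq; congr sq_unit; ring.
Qed.

Lemma part1 (s : Rt k n a) : s != 1 -> s != -1 ->
  (s \in Qset k n a <-> condA s \/ condB s).
Proof.
move=> h1 h2; rewrite -val_eqE /= in h1; rewrite -val_eqE /= in h2.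
case: (eqVneq (val s)`_0 1) => e1.
  by apply: part1B (or_introl erefl) e1 _; rewrite polyC1.
case: (eqVneq (val s)`_0 (-1)) => e2.
  by apply: part1B (or_intror erefl) e2 _; rewrite polyCN polyC1.
rewrite charQ1 //; split.
  case=> hle hsq; left; split.
  - by have := divn_eq n 2; have := ltn_pmod n (isT : (0 < 2)%N); lia.
  - by rewrite (congru1 _ (val1C _)) e1.
  - by rewrite (congru1 _ (valN1C _)) e2.
  - by rewrite coef0_emb.
case=> [[hle c1 c2 hsq] | [eps [j [s0 [he [hc _] _ _ _]]]]].
  split; last by rewrite coef0_emb in hsq.
  by have := divn_eq n 2; have := ltn_pmod n (isT : (0 < 2)%N); lia.
move: hc; rewrite (congru1 _ (valA _ _)) => /eqP hc.
by case: he => he; move: hc; rewrite he => hc; [move: e1 | move: e2]; rewrite hc eqxx.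
Qed.

Lemma val_mk (p : {poly k}) : (size p <= L)%N ->
  val (in_qpoly ('X^L : {poly k}) p) = p.
Proof.
move=> hp; rewrite (val_inq hL) Pdiv.Ring.rmodp_small //.
by rewrite size_polyXn ltnS.
Qed.

Lemma part3 : a = (n - 1)%N -> #|Qset k n a| = (#|k| - 3)./2.
Proof.
move=> ha1.
have hL1 : L = 1%N by lia.
have hv : forall s : Rt k n a, val s = ((val s)`_0)%:P.
  by move=> s; apply: size1_polyC; apply: leq_trans (size_val s) _; rewrite hL1.
rewrite -(card_in_imset (f := fun s : Rt k n a => (val s)`_0)); last first.
  by move=> s t _ _ e; apply: val_inj; rewrite hv [RHS]hv /= e.
rewrite -(card_conic two); apply: eq_card => c; rewrite [in RHS]inE.
have hle : (n <= 2 * a + 1)%N by lia.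
apply/imsetP/idP.
  case=> s hs ->.
  have [_ _ h1 h2] := (memQ s).1 hs.
  have e1 : (val s)`_0 != 1 by apply: contra h1; rewrite {2}(hv s) => /eqP ->.
  have e2 : (val s)`_0 != -1 by apply: contra h2; rewrite {2}(hv s) => /eqP ->; rewrite polyCN.
  have [_ hq] := (charQ1 e1 e2).1 hs.
  by rewrite e1 e2; apply/sqbP.
case/and3P => e1 e2 /sqbP hq.
have hs : val (in_qpoly ('X^L : {poly k}) c%:P) = c%:P.
  by apply: val_mk; rewrite size_polyC hL1; case: (c != 0).
exists (in_qpoly ('X^L : {poly k}) c%:P); last by rewrite hs coefC.
have e0 : (val (in_qpoly ('X^L : {poly k}) c%:P))`_0 = c by rewrite hs coefC.
by apply/(charQ1 (s := in_qpoly ('X^L : {poly k}) c%:P)); rewrite e0.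
Qed.

Section Pr.
Hypothesis h2 : (a.+2 <= n)%N.
Local Notation M := (n - a - 1)%N.

Lemma hM : (0 < M)%N. Proof. lia. Qed.
Lemma hLM : L = M.+1. Proof. lia. Qed.

Lemma pr_eqv (s t : Rt k n a) : (pr s == pr t) = ('X^M %| val s - val t).
Proof. exact: (inq_eq hM). Qed.

Lemma pr_eqc (s : Rt k n a) (eps : k) :
  (eps = 1 \/ eps = -1) ->
  (pr s == (eps%:A : Rpr k n a)) = ('X^M %| val s - eps%:P).
Proof.
move=> heps.
have -> : (eps%:A : Rpr k n a) = in_qpoly ('X^M : {poly k}) eps%:P.
  case: heps => ->.
    by rewrite scale1r polyC1 in_qpoly1.
  by rewrite scaleN1r polyCN polyC1 raddfN /= in_qpoly1.
exact: (inq_eq hM).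
Qed.

Lemma fiberX (t : Rt k n a) (p : {poly k}) : (size p <= L)%N -> 'X^M %| val t - p ->
  exists c, val t = p + c *: 'X^M.
Proof.
move=> hp /dvdpP [q hq].
have -> : val t = p + q * 'X^M by rewrite -hq addrC subrK.
case: (eqVneq q 0) => hq0.
  by exists 0; rewrite hq0 mul0r scale0r.
have : (size (q * 'X^M)%R <= L)%N.
  rewrite -hq; apply: leq_trans (size_add _ _) _; rewrite geq_max size_val size_opp hp.
  by [].
rewrite size_mulXn // hLM => hs.
have hq1 : (size q <= 1)%N by lia.
by exists q`_0; rewrite -mul_polyC -(size1_polyC hq1).
Qed.

Lemma size_fib (p : {poly k}) (c : k) : (size p <= L)%N -> (size (p + c *: 'X^M)%R <= L)%N.
Proof.
move=> hp; apply: leq_trans (size_add _ _) _; rewrite geq_max hp /=.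
by apply: leq_trans (size_scale_leq _ _) _; rewrite size_polyXn; lia.
Qed.

Lemma val_fib (p : {poly k}) c : (size p <= L)%N ->
  val (in_qpoly ('X^L : {poly k}) (p + c *: 'X^M)) = p + c *: 'X^M.
Proof. by move=> hp; rewrite val_mk // size_fib. Qed.

Lemma fib_inj (p : {poly k}) : (size p <= L)%N ->
  injective (fun c : k => in_qpoly ('X^L : {poly k}) (p + c *: 'X^M)).
Proof.
move=> hp c d e; have e' := congr1 val e.
rewrite !val_fib // in e'; have := congr1 (fun q : {poly k} => q`_M) e'.
by rewrite !coefD !coefZ coefXn eqxx !mulr1 => /addrI.
Qed.

Lemma sqb0 : ~~ sqb (0 : k).
Proof.
apply/existsP => [[y /andP [hy /eqP e]]]; move: e; apply/eqP.
by rewrite expf_eq0 /= hy.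
Qed.

Lemma XMc (c : k) : 'X^M * c%:P = c *: 'X^M.
Proof. by rewrite mulrC mul_polyC. Qed.

Lemma part_i eps : (eps = 1 \/ eps = -1) ->
  #|[set s in Qset k n a | 'X^M %| val s - eps%:P]| = (#|k| - 1)./2.
Proof.
move=> heps.
have heps0 : eps != 0 by case: heps => ->; rewrite ?oppr_eq0 oner_eq0.
set u := (-1) ^+ M * (2%:R * eps).
have hu : u != 0 by rewrite mulf_neq0 ?signr_eq0 // mulf_neq0.
have hp : (size (eps%:P) <= L)%N by rewrite size_polyC; case: (eps != 0); rewrite // hL.
rewrite -(card_sq_scale two hu) -(card_imset _ (fib_inj hp)).
apply: eq_card => s; rewrite inE.
apply/andP/imsetP.
  case=> hq hd; have [c hc] := fiberX hp hd.
  have hc0 : c != 0.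
    apply/negP => /eqP c0; move: hc; rewrite c0 scale0r addr0 => e.
    have [_ _ g1 g2] := (memQ s).1 hq.
    by case: heps => he; move: g1 g2; rewrite e he ?polyCN polyC1 eqxx // andbF.
  exists c; last by apply: val_inj; rewrite val_fib.
  rewrite inE; apply/sqbP.
  have hc' : val s = eps%:P + 'X^M * c%:P by rewrite XMc.
  have hc0' : (c%:P)`_0 != 0 by rewrite coefC.
  have [_ hsq] := (charQ2 heps hM hc0' hc').1 hq.
  by move: hsq; rewrite coefC /=; congr sq_unit; rewrite /u; ring.
case=> c; rewrite inE => /sqbP hc ->.
have hc0 : c != 0 by apply: contraNneq sqb0 => hc0; apply/sqbP; move: hc; rewrite hc0 mulr0.
have hv := val_fib c hp.
split; last by rewrite hv addrAC subrr add0r -mul_polyC dvdp_mulIr.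
have hc0' : (c%:P)`_0 != 0 by rewrite coefC.
have hv' : val (in_qpoly ('X^L : {poly k}) (eps%:P + c *: 'X^M)) = eps%:P + 'X^M * c%:P.
  by rewrite hv XMc.
apply/(charQ2 heps hM hc0' hv'); split; first by lia.
by move: hc; congr sq_unit; rewrite coefC /= /u; ring.
Qed.

Lemma eq0n_false m : (0 < m)%N -> (0 == m)%N = false.
Proof. by case: m. Qed.

Lemma fib_eps (s0 s : Rt k n a) (eps c : k) : (eps = 1 \/ eps = -1) ->
  (val s0)`_0 = eps -> ~~ ('X^M %| val s0 - eps%:P) ->
  val s = val s0 + c *: 'X^M -> s0 \in Qset k n a -> s \in Qset k n a.
Proof.
move=> heps hS0 hnd hs hq.
have hne' : val s0 - eps%:P != 0 by apply: contraNneq hnd => ->; rewrite dvdp0.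
have [j [W [hd hW0]]] := decompX hne'.
have hj : (0 < j)%N.
  case: j hd => // hd; move: hW0; rewrite -[W]mul1r -(expr0 'X) -hd.
  by rewrite coefB coefC hS0 subrr eqxx.
have hs0 : val s0 = eps%:P + 'X^j * W by rewrite -hd addrC subrK.
have hjM : (j < M)%N.
  by rewrite ltnNge -(dvdXn_XnW M j hW0) -hd.
set W' := W + c *: 'X^(M - j).
have hW'0 : W'`_0 != 0.
  by rewrite /W' coefD coefZ coefXn; rewrite eq0n_false ?subn_gt0 //; rewrite mulr0 addr0.
have hs' : val s = eps%:P + 'X^j * W'.
  rewrite hs hs0 /W' mulrDr -addrA; congr (_ + (_ + _)).
  by rewrite -scalerAr -exprD subnKC // ltnW.
have [he hsq] := (charQ2 heps hj hW0 hs0).1 hq.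
apply/(charQ2 heps hj hW'0 hs'); split => //.
move: hsq; congr sq_unit; congr (_ * (_ * _)).
by rewrite /W' coefD coefZ coefXn; rewrite eq0n_false ?subn_gt0 //; rewrite mulr0 addr0.
Qed.

Lemma part_ii (s0 : Rt k n a) :
  ~~ ('X^M %| val s0 - 1%:P) -> ~~ ('X^M %| val s0 - (-1)%:P) ->
  #|[set s : Rt k n a | pr s == pr s0]| = #|k| /\
  (s0 \in Qset k n a <-> [set s : Rt k n a | pr s == pr s0] \subset Qset k n a).
Proof.
move=> n1 n2.
have hp := size_val s0.
split.
  rewrite -cardsT -(card_imset _ (fib_inj hp)).
  apply: eq_card => s; rewrite inE pr_eqv; apply/idP/imsetP.
    move=> hd; have [c hc] := fiberX hp hd.
    by exists c; rewrite ?inE //; apply: val_inj; rewrite val_fib.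
  by case=> c _ ->; rewrite val_fib // addrAC subrr add0r -mul_polyC dvdp_mulIr.
split; last by move/subsetP; apply; rewrite inE eqxx.
move=> hq; apply/subsetP => s; rewrite inE pr_eqv => hd.
have [c hc] := fiberX hp hd.
case: (eqVneq (val s0)`_0 1) => e1.
  by apply: (fib_eps (or_introl erefl) e1 n1 hc hq).
case: (eqVneq (val s0)`_0 (-1)) => e2.
  by apply: (fib_eps (or_intror erefl) e2 n2 hc hq).
have c0 : (val s)`_0 = (val s0)`_0.
  by rewrite hc coefD coefZ coefXn; rewrite eq0n_false ?hM //; rewrite mulr0 addr0.
have [h1 h3] := (charQ1 e1 e2).1 hq.
by apply/charQ1; rewrite c0.
Qed.

End Pr.

End Main.

Lemma two_neq0 (k : finFieldType) : odd #|k| -> (2%:R : k) != 0.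
Proof.
move=> odk; apply/negP => /eqP h2.
have ch : (2%N \in [pchar k]) by rewrite inE /= h2 eqxx.
have := card_pprimeChar ch.
rewrite /pPrimeCharType => E.
move: odk; rewrite E oddX /= orbF => /eqP E0.
by move: E; rewrite E0 expn0 => E1; have := finNzRing_gt1 k; rewrite -E1 /= ltnn.
Qed.

Unset Implicit Arguments. Set Strict Implicit.

Theorem lemma4p15 (k : finFieldType) (n a : nat) :
  (0 < n)%N -> (a <= n - 1)%N -> odd #|k| ->
  (forall s : Rt k n a, s != 1 -> s != -1 ->
     (s \in Qset k n a <-> condA s \/ condB s)) /\
  ((a.+2 <= n)%N ->
     #|[set s in Qset k n a | pr s == 1]| = (#|k| - 1)./2 /\
     #|[set s in Qset k n a | pr s == -1]| = (#|k| - 1)./2) /\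
  ((a.+2 <= n)%N ->
     forall s0 : Rt k n a, Rprime s0 -> pr s0 != 1 -> pr s0 != -1 ->
       #|[set s : Rt k n a | pr s == pr s0]| = #|k| /\
       (s0 \in Qset k n a <->
          [set s : Rt k n a | pr s == pr s0] \subset Qset k n a)) /\
  #|Qset k n (n - 1)| = (#|k| - 3)./2.
Proof.
move=> hn han hodd; have two := two_neq0 hodd.
have e1 : (1 : Rpr k n a) = 1%:A by rewrite scale1r.
have eN1 : (-1 : Rpr k n a) = (-1)%:A by rewrite scaleN1r.
split; first by move=> s; exact: part1.
split.
  move=> h2; split.
    rewrite -(part_i hn han two h2 (or_introl erefl)).
    by apply: eq_card => s; rewrite !inE e1 (pr_eqc hn han two h2 _ (or_introl erefl)).
  rewrite -(part_i hn han two h2 (or_intror erefl)).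
  by apply: eq_card => s; rewrite !inE eN1 (pr_eqc hn han two h2 _ (or_intror erefl)).
split; last by apply: (part3 hn (leqnn _) two).
move=> h2 s0 _ n1 n2; apply: (part_ii hn han two h2).
  by rewrite -(pr_eqc hn han two h2 _ (or_introl erefl)) -e1.
by rewrite -(pr_eqc hn han two h2 _ (or_intror erefl)) -eN1.
Qed.
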